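(* Let $V\subseteq\mathcal V$ be finite and $\mathcal E,\mathcal F\in\mathit{DProg}(V)$. Then (1) $\{\mathcal E\}\le_T^s\{\mathcal F\}$ iff $\mathcal E\le_T^e\mathcal F$; (2) $\{\mathcal E\}\le_P^s\{\mathcal F\}$ iff $\mathcal E\le_P^e\mathcal F$.
   Context: $\mathcal V$ is a countably infinite set of qubit variables; $\mathcal H_V=\bigotimes_{q\in V}\mathcal H_q$ for finite $V$. $\mathcal D(\mathcal H)$: partial density operators; $\mathcal P(\mathcal H)$: effects (positive operators with eigenvalues in $[0,1]$). $\mathit{DProg}(V)$: completely positive trace-nonincreasing super-operators on $\mathcal L(\mathcal H_V)$. Operators/super-operators on subsystems are implicitly extended by tensoring with identities. Effect-based: for finite $W$ and $M,N\in\mathcal P(\mathcal H_W)$, $\mathcal E\models_{tot}(M,N)$ iff for all finite $X\supseteq V\cup W$ and $\rho\in\mathcal D(\mathcal H_X)$, ${\rm tr}(M\rho)\le{\rm tr}(N\mathcal E(\rho))$; $\mathcal E\models_{par}(M,N)$ iff moreover-with-slack ${\rm tr}(M\rho)\le{\rm tr}(N\mathcal E(\rho))+{\rm tr}(\rho)-{\rm tr}(\mathcal E(\rho))$ for all such $X,\rho$. $\mathcal E\le_T^e\mathcal F$ (resp. $\le_P^e$) iff every $(M,N)$ (over all finite $W$) satisfied by $\mathcal E$ in the total (resp. partial) sense is satisfied by $\mathcal F$. Set-of-effects based: for a set of super-operators $\mathbb E$ and $\Theta,\Psi\subseteq\mathcal P(\mathcal H_W)$, let $\mathrm{Exp}_{dem}(\rho\models\Theta)=\inf_{M\in\Theta}{\rm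 tr}(M\rho)$ (equal to ${\rm tr}(\rho)$ if $\Theta=\emptyset$). $\mathbb E\models_{tot}(\Theta,\Psi)$ iff for all finite $X\supseteq V\cup W$ and $\rho\in\mathcal D(\mathcal H_X)$, $\mathrm{Exp}_{dem}(\rho\models\Theta)\le\inf_{\mathcal E\in\mathbb E}\mathrm{Exp}_{dem}(\mathcal E(\rho)\models\Psi)$; $\mathbb E\models_{par}(\Theta,\Psi)$ iff for all such $X,\rho$, $\mathrm{Exp}_{dem}(\rho\models\Theta)\le\inf_{\mathcal E\in\mathbb E}[\mathrm{Exp}_{dem}(\mathcal E(\rho)\models\Psi)+{\rm tr}(\rho)-{\rm tr}(\mathcal E(\rho))]$. $\mathbb E\le_T^s\mathbb F$ (resp. $\le_P^s$) iff for every finite $W$ and all $\Theta,\Psi\subseteq\mathcal P(\mathcal H_W)$, $\mathbb E\models_{tot}(\Theta,\Psi)$ implies $\mathbb F\models_{tot}(\Theta,\Psi)$ (resp. with $\models_{par}$). *)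

(* Defs.v *)
From HB Require Import structures.
From mathcomp Require Import all_boot all_order all_algebra.
From mathcomp Require Import boolp classical_sets reals.
From mathcomp Require Import complex.

Set Implicit Arguments.
Unset Strict Implicit.
Unset Printing Implicit Defensive.

Import Order.TTheory GRing.Theory Num.Theory.
Local Open Scope ring_scope.
Local Open Scope classical_set_scope.

(* Qubit variables: the countably infinite set  nat.  A finite set of *)
(* variables is represented by a list (duplicates are irrelevant).    *)
Definition qvar := nat.
Definition vset := seq qvar.

(* computational basis of H_X : assignments  X -> bool                *)
Definition bas (X : vset) := {ffun seq_sub X -> bool}.

(* a basis state of H_X seen as a global assignment (false outside X) *)
Definition glob (X : vset) (b : bas X) : nat -> bool :=
  fun n => [exists x : seq_sub X, (val x == n) && b x].
Definition loc (X : vset) (f : nat -> bool) : bas X := [ffun x => f (val x)].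
Definition res (X Y : vset) (b : bas X) : bas Y := loc Y (glob b).
Definition vdiff (X V : vset) : vset := [seq x <- X | x \notin V].
(* for V ⊆ X: the basis state of H_X = H_V ⊗ H_{X\V} built from v and r *)
Definition comb (V X : vset) (v : bas V) (r : bas (vdiff X V)) : bas X :=
  loc X (fun n => if n \in V then glob v n else glob r n).

Section Quantum.
Variable R : realType.
Local Notation C := (R[i]).

Definition opT (I : finType) := I -> I -> C.
Definition op (X : vset) := opT (bas X).

Definition tr (I : finType) (A : opT I) : C := \sum_(i : I) A i i.
Definition mulop (I : finType) (A B : opT I) : opT I :=
  fun i j => \sum_(k : I) A i k * B k j.
Definition idop (I : finType) : opT I := fun i j => (i == j)%:R.
Definition qform (I : finType) (A : opT I) (v : I -> C) : C :=
  \sum_(i : I) \sum_(j : I) conjc (v i) * A i j * v j.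
(* positive (semidefinite) operator; 0 <= z in C means z real and >= 0 *)
Definition psd (I : finType) (A : opT I) : Prop := forall v, 0 <= qform A v.
Definition loew (I : finType) (A B : opT I) : Prop :=
  psd (fun i j => B i j - A i j).

Definition effect (W : vset) (M : op W) : Prop := psd M /\ loew M (@idop _).
Definition pdensity (X : vset) (rho : op X) : Prop := psd rho /\ tr rho <= 1.

Definition sop (V : vset) := op V -> op V.

Definition sop_linear (V : vset) (E : sop V) : Prop :=
  forall (a : C) (A B : op V) i j,
    E (fun k l => a * A k l + B k l) i j = a * E A i j + E B i j.

(* id_T ⊗ E acting on L(C^T ⊗ H_V) *)
Definition ampl (V : vset) (E : sop V) (T : finType) :
    opT (T * bas V)%type -> opT (T * bas V)%type :=
  fun rho p q => E (fun u u' => rho (p.1, u) (q.1, u')) p.2 q.2.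

Definition sop_CP (V : vset) (E : sop V) : Prop :=
  forall (T : finType) (rho : opT (T * bas V)%type), psd rho -> psd (ampl E rho).

Definition sop_TNI (V : vset) (E : sop V) : Prop :=
  forall rho : op V, psd rho -> tr (E rho) <= tr rho.

Definition DProg (V : vset) (E : sop V) : Prop :=
  [/\ sop_linear E, sop_CP E & sop_TNI E].

(* implicit extensions by tensoring with identities (V ⊆ X) *)
Definition extS (V X : vset) (E : sop V) : sop X :=
  fun rho b b' =>
    E (fun v v' => rho (comb v (res (vdiff X V) b))
                       (comb v' (res (vdiff X V) b')))
      (res V b) (res V b').

Definition extO (W X : vset) (M : op W) : op X :=
  fun b b' => M (res W b) (res W b') *
              (res (vdiff X W) b == res (vdiff X W) b')%:R.

Definition expv (W X : vset) (M : op W) (rho : op X) : R :=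
  complex.Re (tr (mulop (@extO W X M) rho)).

Definition sat_tot_e (V W : vset) (E : sop V) (M N : op W) : Prop :=
  forall X : vset, {subset V ++ W <= X} ->
  forall rho : op X, pdensity rho ->
    expv M rho <= expv N (@extS V X E rho).

Definition sat_par_e (V W : vset) (E : sop V) (M N : op W) : Prop :=
  forall X : vset, {subset V ++ W <= X} ->
  forall rho : op X, pdensity rho ->
    expv M rho <= expv N (@extS V X E rho)
                  + complex.Re (tr rho) - complex.Re (tr (@extS V X E rho)).

Definition le_T_e (V : vset) (E F : sop V) : Prop :=
  forall (W : vset) (M N : op W), effect M -> effect N ->
    sat_tot_e E M N -> sat_tot_e F M N.

Definition le_P_e (V : vset) (E F : sop V) : Prop :=
  forall (W : vset) (M N : op W), effect M -> effect N ->
    sat_par_e E M N -> sat_par_e F M N.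

Definition expdem (W X : vset) (rho : op X) (Theta : set (op W)) : R :=
  if pselect (Theta = set0) then complex.Re (tr rho)
  else inf [set expv M rho | M in Theta].

(* a <= inf_{E in EE} f(E) is expressed as: a <= f(E) for all E in EE
   (this is exactly the meaning of the infimum, including EE = ∅) *)
Definition sat_tot_s (V W : vset) (EE : set (sop V)) (Theta Psi : set (op W))
  : Prop :=
  forall X : vset, {subset V ++ W <= X} ->
  forall rho : op X, pdensity rho ->
  forall E, EE E -> expdem rho Theta <= expdem (@extS V X E rho) Psi.

Definition sat_par_s (V W : vset) (EE : set (sop V)) (Theta Psi : set (op W))
  : Prop :=
  forall X : vset, {subset V ++ W <= X} ->
  forall rho : op X, pdensity rho ->
  forall E, EE E ->
    expdem rho Theta <= expdem (@extS V X E rho) Psi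
                        + complex.Re (tr rho) - complex.Re (tr (@extS V X E rho)).

Definition le_T_s (V : vset) (EE FF : set (sop V)) : Prop :=
  forall (W : vset) (Theta Psi : set (op W)),
    Theta `<=` @effect W -> Psi `<=` @effect W ->
    sat_tot_s EE Theta Psi -> sat_tot_s FF Theta Psi.

Definition le_P_s (V : vset) (EE FF : set (sop V)) : Prop :=
  forall (W : vset) (Theta Psi : set (op W)),
    Theta `<=` @effect W -> Psi `<=` @effect W ->
    sat_par_s EE Theta Psi -> sat_par_s FF Theta Psi.

End Quantum.

(* Main.v *)
Require Import Defs.
From HB Require Import structures.
From mathcomp Require Import all_boot all_order all_algebra.
From mathcomp Require Import boolp classical_sets reals.
From mathcomp Require Import complex.
From mathcomp Require Import sesquilinear spectral.
From mathcomp Require Import ring lra.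

Set Implicit Arguments.
Unset Strict Implicit.
Unset Printing Implicit Defensive.
Import Order.TTheory GRing.Theory Num.Theory.


Lemma globE (X : vset) (b : bas X) (x : seq_sub X) : glob b (val x) = b x.
Proof.
apply/existsP/idP => [[y /andP[/eqP e h]]|h].
  by have -> : x = y by apply: val_inj.
by exists x; rewrite eqxx h.
Qed.

Lemma glob_out (X : vset) (b : bas X) n : n \notin X -> glob b n = false.
Proof.
move=> nX; apply/existsP => [[y /andP[/eqP e _]]].
by move: (ssvalP y); rewrite /= e => h; rewrite h in nX.
Qed.

Lemma bas_eq (X : vset) (b b' : bas X) :
  (forall n, n \in X -> glob b n = glob b' n) -> b = b'.
Proof.
move=> h; apply/ffunP => x; rewrite -!globE; apply: h; exact: (ssvalP x).
Qed.

Lemma glob_loc (X : vset) f n : glob (loc X f) n = (n \in X) && f n.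
Proof.
case nX: (n \in X); last by rewrite glob_out ?nX.
have -> : n = val (SeqSub nX) by [].
by rewrite globE /loc ffunE.
Qed.

Lemma glob_res X Y (b : bas X) n : glob (res Y b) n = (n \in Y) && glob b n.
Proof. by rewrite /res glob_loc. Qed.

Lemma mem_vdiff X V n : (n \in vdiff X V) = (n \in X) && (n \notin V).
Proof. by rewrite /vdiff mem_filter andbC. Qed.

Lemma glob_comb V X (v : bas V) (r : bas (vdiff X V)) n :
  glob (comb v r) n = (n \in X) && (if n \in V then glob v n else glob r n).
Proof. by rewrite /comb glob_loc. Qed.

Lemma glob_in X (b : bas X) n : glob b n -> n \in X.
Proof. by case nX: (n \in X) => //; rewrite glob_out ?nX. Qed.

Lemma res_comb V X (v : bas V) (r : bas (vdiff X V)) :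
  {subset V <= X} -> res V (comb v r) = v.
Proof.
move=> VX; apply: bas_eq => n nV; by rewrite glob_res glob_comb nV (VX _ nV).
Qed.

Lemma res_comb2 V X (v : bas V) (r : bas (vdiff X V)) :
  res (vdiff X V) (comb v r) = r.
Proof.
apply: bas_eq => n; rewrite glob_res glob_comb mem_vdiff => /andP[nX /negbTE nV].
by rewrite nX nV.
Qed.

Lemma comb_res V X (b : bas X) : comb (res V b) (res (vdiff X V) b) = b.
Proof.
apply: bas_eq => n nX; rewrite glob_comb !glob_res nX mem_vdiff nX /=.
by case: (n \in V).
Qed.

Lemma res_res X Y Z (b : bas X) : {subset Z <= Y} -> res Z (res Y b) = res Z b.
Proof.
move=> ZY; apply: bas_eq => n nZ; by rewrite !glob_res nZ (ZY _ nZ).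
Qed.

Lemma res_id X (b : bas X) : res X b = b.
Proof. by apply: bas_eq => n nX; rewrite glob_res nX. Qed.

Lemma res_eqP X Y (b b' : bas X) :
  reflect (forall n, n \in Y -> glob b n = glob b' n) (res Y b == res Y b').
Proof.
apply: (iffP eqP) => [h n nY|h].
  by move: (congr1 (fun c => glob c n) h) => /=; rewrite !glob_res nY.
by apply: bas_eq => n nY; rewrite !glob_res nY h.
Qed.

Lemma res_full X Y (b b' : bas X) : {subset X <= Y} ->
  (res Y b == res Y b') = (b == b').
Proof.
move=> XY; apply/res_eqP/eqP => [h|-> //]; apply: bas_eq => n nX; exact: h (XY _ nX).
Qed.

Local Open Scope ring_scope.

Section LA.
Variable R : realType.
Local Notation C := (R[i]).

Lemma conjcE (z : C) : conjc z = z^*. Proof. by []. Qed.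

Lemma sum_delta (I : finType) (i : I) (F : I -> C) :
  \sum_(a : I) (a == i)%:R * F a = F i.
Proof.
rewrite (bigD1 i) //= eqxx mul1r big1 ?addr0 // => a /negbTE ->; by rewrite mul0r.
Qed.

Lemma sum_delta' (I : finType) (i : I) (F : I -> C) :
  \sum_(a : I) F a * (a == i)%:R = F i.
Proof. by rewrite -[RHS](sum_delta i); apply: eq_bigr => a _; rewrite mulrC. Qed.

Lemma qform2 (I : finType) (B : opT R I) (i j : I) (c : C) :
  qform B (fun a => (a == i)%:R + c * (a == j)%:R) =
  B i i + c * B i j + c^* * B j i + c^* * c * B j j.
Proof.
rewrite /qform.
under eq_bigr => a _.
  under eq_bigr => b _ do rewrite mulrDr.
  rewrite big_split /= sum_delta'.
  under eq_bigr => b _ do rewrite mulrA.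
  rewrite sum_delta' conjcE rmorphD rmorphM /= !conjC_nat.
  over.
rewrite /=.
under eq_bigr => a _ do rewrite !mulrDl -!(mulrA (c^*)).
rewrite !big_split /= -!mulr_sumr !sum_delta -!mulr_suml !sum_delta; ring.
Qed.

Lemma psd_herm (I : finType) (B : opT R I) (i j : I) :
  psd B -> B j i = (B i j)^*.
Proof.
move=> hB.
have hr : forall (k : I) (c : C), (qform B (fun a => (a == k)%:R + c * (a == j)%:R))^* =
   qform B (fun a => (a == k)%:R + c * (a == j)%:R).
  by move=> k c; apply/eqP; rewrite -CrealE; apply: ger0_real; apply: hB.
have h0 := hr i 0; have h1 := hr i 1; have hi := hr i 'i; have hjj := hr j 0.
rewrite !qform2 in h0 h1 hi hjj.
rewrite !(mul0r, mulr0, add0r, addr0, rmorph0, mul1r, conjC1) in h0 h1 hjj.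
rewrite !rmorphD !rmorphM /= !conjCK conjCi in hi.
rewrite !rmorphD /= in h1; rewrite h0 hjj in h1 hi.
have e1 : (B i j)^* + (B j i)^* = B i j + B j i.
  by apply: (addIr (B j j)); apply: (addrI (B i i)); rewrite !addrA.
have ii : - 'i * 'i = 1 :> C by rewrite mulNr -expr2 sqrCi opprK.
have ii' : 'i * - 'i = 1 :> C by rewrite mulrN -expr2 sqrCi opprK.
have e2 : - 'i * (B i j)^* + 'i * (B j i)^* = 'i * B i j - 'i * B j i.
  move: hi; rewrite ii ii' !mul1r => hi.
  apply: (addIr (B j j)); apply: (addrI (B i i)).
  rewrite !addrA hi; ring.
have e3 : - (B i j)^* + (B j i)^* = B i j - B j i.
  apply: (mulfI (@neq0Ci C)); rewrite mulrDr mulrN mulrBr -e2; ring.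
have e4 : 2%:R * (B j i)^* = 2%:R * B i j.
  have := congr2 (fun a b => a + b) e1 e3 => /= h.
  rewrite -[LHS]addr0 -(subrr (B j i)^*) -[RHS]addr0 -(subrr (B i j)^*).
  move: h; rewrite !mulr2n => h.
  have -> : (1 + 1) * (B j i)^* + ((B j i)^* - (B j i)^*) = (B i j)^* + (B j i)^* + (- (B i j)^* + (B j i)^*) by ring.
  rewrite h; ring.
have e5 : (B j i)^* = B i j.
  have n2 : (2%:R : C) != 0 by rewrite pnatr_eq0.
  exact: (mulfI n2).
by rewrite -e5 conjCK.
Qed.

Local Open Scope sesquilinear_scope.

Definition psdm n (M : 'M[C]_n) :=
  forall u : 'I_n -> C, 0 <= \sum_l \sum_m (u l)^* * M l m * u m.

Lemma psdm_conj n (M Q : 'M[C]_n) k : psdm M -> 0 <= (Q *m M *m Q^t*) k k.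
Proof.
move=> hM; have := hM (fun l => (Q k l)^*).
have -> : (Q *m M *m Q^t*) k k = \sum_l \sum_m ((Q k l)^*)^* * M l m * (Q k m)^*.
  rewrite mxE exchange_big /=; apply: eq_bigr => l _.
  rewrite mxE mulr_suml; apply: eq_bigr => m _.
  by rewrite !mxE conjCK.
by [].
Qed.

Lemma psdm_tr n (A B : 'M[C]_n) : psdm A -> psdm B ->
  B^t* = B -> 0 <= \tr (A *m B).
Proof.
move=> hA hB hh.
have nB : B \is normalmx by apply/normalmxP; rewrite hh.
set P := spectralmx B; set d := spectral_diag B.
have hP : P \is unitarymx := spectral_unitarymx B.
have eB : B = P^t* *m diag_mx d *m P.
  by rewrite -invmx_unitary //; apply/orthomx_spectralP.
have PP : P *m P^t* = 1%:M by apply/unitarymxP.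
have eD : P *m B *m P^t* = diag_mx d.
  by rewrite eB !mulmxA PP mul1mx -!mulmxA PP mulmx1.
have -> : \tr (A *m B) = \tr ((P *m A *m P^t*) *m diag_mx d).
  by rewrite eB !mulmxA mxtrace_mulC !mulmxA.
rewrite /mxtrace.
apply: sumr_ge0 => k _; rewrite mul_mx_diag mxE.
apply: mulr_ge0; first exact: psdm_conj.
have := psdm_conj P k hB; rewrite eD mxE eqxx mulr1n.
by [].
Qed.

Definition mxo (I : finType) (A : opT R I) : 'M[C]_#|I| :=
  \matrix_(k, l) A (enum_val k) (enum_val l).

Lemma sum_enum (I : finType) (F : I -> C) :
  \sum_(i : I) F i = \sum_(k < #|I|) F (enum_val k).
Proof.
rewrite (reindex (@enum_val I predT)) //; exists enum_rank => x _.
  exact: enum_valK. exact: enum_rankK.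
Qed.

Lemma psd_mxo (I : finType) (A : opT R I) : psd A -> psdm (mxo A).
Proof.
move=> hA u; have := hA (fun i => u (enum_rank i)).
rewrite /qform sum_enum => h; apply: le_trans h _; rewrite le_eqVlt; apply/orP; left.
apply/eqP; apply: eq_bigr => k _; rewrite sum_enum; apply: eq_bigr => l _.
by rewrite !enum_valK mxE.
Qed.

Lemma tr_psd (I : finType) (A B : opT R I) : psd A -> psd B ->
  0 <= tr (mulop A B).
Proof.
move=> hA hB.
have -> : tr (mulop A B) = \tr (mxo A *m mxo B).
  rewrite /tr /mulop /mxtrace sum_enum; apply: eq_bigr => k _.
  rewrite sum_enum !mxE; apply: eq_bigr => l _; by rewrite !mxE.
apply: psdm_tr; try exact: psd_mxo.
apply/matrixP => k l; rewrite !mxE; rewrite (psd_herm _ _ hB) conjCK //.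
Qed.

End LA.

Local Open Scope ring_scope.

Section Q.
Variable R : realType.
Local Notation C := (R[i]).

Lemma sum_split (W X : vset) (F : bas X -> C) : {subset W <= X} ->
  \sum_(b : bas X) F b = \sum_(w : bas W) \sum_(r : bas (vdiff X W)) F (comb w r).
Proof.
move=> WX; rewrite pair_big /=.
rewrite (reindex (fun p : bas W * bas (vdiff X W) => comb p.1 p.2)) //.
exists (fun b => (res W b, res (vdiff X W) b)) => [[w r] _|b _] /=.
  by rewrite res_comb // res_comb2.
by rewrite comb_res.
Qed.

Definition ptr (X W : vset) (s : op R X) : op R W :=
  fun a a' => \sum_(r : bas (vdiff X W)) s (comb a r) (comb a' r).
Arguments ptr : clear implicits.

Lemma eqb_nat (T : eqType) (x y : T) : ((x == y)%:R : C) = (y == x)%:R.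
Proof. by rewrite eq_sym. Qed.

Lemma sum_only (I : finType) (i : I) (F : I -> C) :
  (forall j, j != i -> F j = 0) -> \sum_j F j = F i.
Proof. by move=> h; rewrite (bigD1 i) //= big1 ?addr0. Qed.

Lemma trE1 (W X : vset) (M : op R W) (s : op R X) : {subset W <= X} ->
  tr (mulop (@extO R W X M) s) = tr (mulop M (ptr X W s)).
Proof.
move=> WX; rewrite /tr /mulop (sum_split _ WX); apply: eq_bigr => w _.
under eq_bigr => r _ do rewrite (sum_split _ WX).
rewrite exchange_big /=; apply: eq_bigr => w' _.
rewrite /ptr mulr_sumr; apply: eq_bigr => r _.
under eq_bigr => r' _ do rewrite /extO !res_comb // !res_comb2 -mulrA.
rewrite -mulr_sumr; congr (_ * _).
under eq_bigr => r' _ do rewrite eqb_nat.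
by rewrite sum_delta.
Qed.

Definition blk (X W : vset) (s : op R X) (r : bas (vdiff X W)) : op R W :=
  fun a a' => s (comb a r) (comb a' r).
Arguments blk : clear implicits.

Lemma psd_blk (X W : vset) (s : op R X) r : {subset W <= X} ->
  psd s -> psd (blk X W s r).
Proof.
move=> WX hs v.
have := hs (fun b => v (res W b) * (res (vdiff X W) b == r)%:R).
rewrite /qform (sum_split _ WX) => h.
apply: le_trans h _; rewrite le_eqVlt; apply/orP; left; apply/eqP.
apply: eq_bigr => w _.
rewrite (@sum_only _ r) => [|r0 nr]; last first.
  by rewrite big1 // => b _; rewrite res_comb2 (negbTE nr) mulr0 conjc0 !mul0r.
rewrite (sum_split _ WX); apply: eq_bigr => w' _.
rewrite (@sum_only _ r) => [|r0 nr]; last first.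
  by rewrite !res_comb2 (negbTE nr) !mulr0.
by rewrite !res_comb // !res_comb2 eqxx !mulr1 conjcE.
Qed.

Lemma qform_sum (I J : finType) (F : J -> opT R I) v :
  qform (fun a a' => \sum_j F j a a') v = \sum_j qform (F j) v.
Proof.
rewrite /qform; under eq_bigr => a _ do under eq_bigr => a' _ do
  rewrite mulr_sumr mulr_suml.
under eq_bigr => a _ do rewrite exchange_big.
by rewrite exchange_big.
Qed.

Lemma psd_sum (I J : finType) (F : J -> opT R I) :
  (forall j, psd (F j)) -> psd (fun a a' => \sum_j F j a a').
Proof. by move=> h v; rewrite qform_sum; apply: sumr_ge0 => j _; apply: h. Qed.

Lemma psd_ptr (X W : vset) (s : op R X) : {subset W <= X} ->
  psd s -> psd (ptr X W s).
Proof. by move=> WX hs; apply: psd_sum => r; apply: psd_blk. Qed.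

Lemma tr_ptr (X W : vset) (s : op R X) : {subset W <= X} ->
  tr (ptr X W s) = tr s.
Proof. by move=> WX; rewrite /tr (sum_split _ WX). Qed.

Lemma psd_extO (W X : vset) (K : op R W) : {subset W <= X} ->
  psd K -> psd (@extO R W X K).
Proof.
move=> WX hK v.
have -> : qform (@extO R W X K) v =
   \sum_(r : bas (vdiff X W)) qform K (fun w => v (comb w r)).
  rewrite /qform (sum_split _ WX) exchange_big /=; apply: eq_bigr => r _.
  apply: eq_bigr => w _; rewrite (sum_split _ WX); apply: eq_bigr => w' _.
  rewrite (@sum_only _ r) => [|r0 nr]; last first.
    by rewrite /extO !res_comb2 eq_sym (negbTE nr) mulr0 mulr0 mul0r.
  by rewrite /extO !res_comb // !res_comb2 eqxx mulr1.
by apply: sumr_ge0 => r _; apply: hK.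
Qed.

Lemma comb_eq (W X : vset) (w w' : bas W) (r r' : bas (vdiff X W)) :
  {subset W <= X} -> (comb w r == comb w' r') = (w == w') && (r == r').
Proof.
move=> WX; apply/eqP/andP => [e|[/eqP -> /eqP -> //]].
split; apply/eqP.
  by rewrite -(res_comb w r WX) e res_comb.
by rewrite -(res_comb2 w r) e res_comb2.
Qed.

Lemma extO_id (W X : vset) : {subset W <= X} ->
  @extO R W X (@idop R _) = @idop R _.
Proof.
move=> WX; apply/funext => b; apply/funext => b'; rewrite /extO /idop.
rewrite -(comb_res W b) -(comb_res W b') !res_comb // !res_comb2 comb_eq //.
by case: (_ == _); case: (_ == _); rewrite ?mulr1 ?mulr0.
Qed.

Lemma res_eq_union (X : vset) (Y1 Y2 Y3 : vset) (b b' : bas X) :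
  {subset Y1 <= Y3} -> {subset Y2 <= Y3} ->
  (forall n, n \in Y3 -> (n \in Y1) || (n \in Y2)) ->
  (res Y1 b == res Y1 b') && (res Y2 b == res Y2 b') = (res Y3 b == res Y3 b').
Proof.
move=> h1 h2 h3; apply/andP/res_eqP.
  move=> [/res_eqP e1 /res_eqP e2] n /h3 /orP[] hn; by [apply: e1|apply: e2].
by move=> e; split; apply/res_eqP => n hn; apply: e; [apply: h1|apply: h2].
Qed.

Lemma extO_trans (W W' X : vset) (K : op R W) : {subset W <= W'} ->
  {subset W' <= X} ->
  @extO R W' X (@extO R W W' K) = @extO R W X K.
Proof.
move=> WW WX; apply/funext => b; apply/funext => b'; rewrite /extO.
have s1 : {subset vdiff W' W <= W'} by move=> n; rewrite mem_vdiff => /andP[].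
rewrite !res_res // -mulrA -natrM mulnb (res_eq_union (Y3 := vdiff X W)) //.
- by move=> n; rewrite !mem_vdiff => /andP[/WX -> ->].
- by move=> n; rewrite !mem_vdiff => /andP[-> ]; apply: contra => /WW.
move=> n; rewrite !mem_vdiff => /andP[-> ->] /=; by case: (n \in W').
Qed.

Lemma extO_sub (W X : vset) (A B : op R W) :
  @extO R W X (fun a a' => A a a' - B a a') =
  (fun b b' => @extO R W X A b b' - @extO R W X B b b').
Proof. by apply/funext => b; apply/funext => b'; rewrite /extO mulrBl. Qed.

Lemma tr_mulop_sub (I : finType) (A B S : opT R I) :
  tr (mulop (fun a a' => A a a' - B a a') S) = tr (mulop A S) - tr (mulop B S).
Proof.
rewrite /tr /mulop -sumrB; apply: eq_bigr => i _; rewrite -sumrB.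
by apply: eq_bigr => k _; rewrite mulrBl.
Qed.

Lemma tr_mulop_id (I : finType) (S : opT R I) : tr (mulop (@idop R I) S) = tr S.
Proof.
rewrite /tr /mulop; apply: eq_bigr => i _; rewrite /idop.
by under eq_bigr => k _ do rewrite eqb_nat; rewrite sum_delta.
Qed.

Definition proj (I : finType) (v : I -> C) : opT R I := fun x y => v x * (v y)^*.

Lemma qform_tr (I : finType) (A : opT R I) v : qform A v = tr (mulop A (proj v)).
Proof.
rewrite /qform /tr /mulop /proj; apply: eq_bigr => i _.
apply: eq_bigr => j _; rewrite conjcE; ring.
Qed.

Lemma psd_proj (I : finType) (v : I -> C) : psd (proj v).
Proof.
move=> u; rewrite /qform /proj.
have -> : \sum_i \sum_j conjc (u i) * (v i * (v j)^*) * u j =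
   (\sum_i (u i)^* * v i) * (\sum_i (u i)^* * v i)^*.
  rewrite mulr_suml; apply: eq_bigr => i _; rewrite rmorph_sum mulr_sumr.
  apply: eq_bigr => j _; rewrite rmorphM /= conjCK conjcE; ring.
exact: mul_conjC_ge0.
Qed.

Lemma psd_id (I : finType) : psd (@idop R I).
Proof.
move=> v; rewrite qform_tr tr_mulop_id /tr /proj.
by apply: sumr_ge0 => i _; apply: mul_conjC_ge0.
Qed.
End Q.

Local Open Scope ring_scope.

Section Q2.
Variable R : realType.
Local Notation C := (R[i]).
Variable V : vset.
Variable E : sop R V.
Hypothesis hlin : sop_linear E.

Lemma Econgr (A B : op R V) i j : (forall k l, A k l = B k l) -> E A i j = E B i j.
Proof. by move=> h; have -> : A = B by apply/funext => k; apply/funext => l. Qed.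

Lemma E0 i j : E (fun _ _ => 0) i j = 0.
Proof.
have := hlin 1 (fun _ _ => 0) (fun _ _ => 0) i j.
rewrite (@Econgr _ (fun _ _ => 0)) => [|k l]; last by rewrite mulr0 addr0.
rewrite mul1r => h; apply: (addrI (E (fun _ _ => 0) i j)); by rewrite addr0 -h.
Qed.

Lemma Eadd (A B : op R V) i j :
  E (fun k l => A k l + B k l) i j = E A i j + E B i j.
Proof.
rewrite -[E A i j]mul1r -hlin; apply: Econgr => k l; by rewrite mul1r.
Qed.

Lemma Escale (a : C) (A : op R V) i j :
  E (fun k l => a * A k l) i j = a * E A i j.
Proof.
rewrite -[RHS]addr0 -(E0 i j) -hlin; apply: Econgr => k l; by rewrite addr0.
Qed.

Lemma Esum_seq (T : Type) (s : seq T) (f : T -> op R V) i j :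
  E (fun k l => \sum_(r <- s) f r k l) i j = \sum_(r <- s) E (f r) i j.
Proof.
elim: s => [|x s IH].
  by rewrite big_nil -[RHS](E0 i j); apply: Econgr => k l; rewrite big_nil.
rewrite big_cons -IH -Eadd; apply: Econgr => k l; by rewrite big_cons.
Qed.

Lemma Esum (T : finType) (f : T -> op R V) i j :
  E (fun k l => \sum_(r : T) f r k l) i j = \sum_(r : T) E (f r) i j.
Proof. exact: Esum_seq. Qed.


Lemma sum_pair (X : vset) (f : bas (vdiff X V) * bas V -> C) : {subset V <= X} ->
  \sum_(p : bas (vdiff X V) * bas V) f p =
  \sum_(b : bas X) f (res (vdiff X V) b, res V b).
Proof.
move=> VX.
rewrite (reindex (fun b : bas X => (res (vdiff X V) b, res V b))) //.
exists (fun p => comb p.2 p.1) => [b _|[r v] _] /=; first by rewrite comb_res.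
by rewrite res_comb // res_comb2.
Qed.

Hypothesis hcp : sop_CP E.
Hypothesis htni : sop_TNI E.

Lemma Ehat_psd (X : vset) (rho : op R X) : {subset V <= X} ->
  psd rho -> psd (@extS R V X E rho).
Proof.
move=> VX hr.
pose T := bas (vdiff X V).
pose rho' : opT R (T * bas V)%type := fun p q => rho (comb p.2 p.1) (comb q.2 q.1).
have hr' : psd rho'.
  move=> u; have h := hr (fun b => u (res (vdiff X V) b, res V b)).
  apply: le_trans h _; rewrite le_eqVlt; apply/orP; left; apply/eqP.
  rewrite [RHS]/qform (sum_pair _ VX); apply: eq_bigr => b _.
  rewrite (sum_pair _ VX); apply: eq_bigr => b' _.
  by rewrite /rho' /= !comb_res.
move=> v; have h := hcp hr' (fun p => v (comb p.2 p.1)).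
apply: le_trans h _; rewrite le_eqVlt; apply/orP; left; apply/eqP.
rewrite /qform (sum_pair _ VX); apply: eq_bigr => b _.
rewrite (sum_pair _ VX); apply: eq_bigr => b' _.
by rewrite /= !comb_res.
Qed.

Lemma Ehat_tr (X : vset) (rho : op R X) : {subset V <= X} ->
  psd rho -> tr (@extS R V X E rho) <= tr rho.
Proof.
move=> VX hr.
have -> : tr (@extS R V X E rho) =
    \sum_(r : bas (vdiff X V)) tr (E (@blk R X V rho r)).
  rewrite /tr (sum_split _ VX) exchange_big /=; apply: eq_bigr => r _.
  apply: eq_bigr => w _; rewrite /extS res_comb // res_comb2; by [].
have -> : tr rho = \sum_(r : bas (vdiff X V)) tr (@blk R X V rho r).
  by rewrite /tr (sum_split _ VX) exchange_big.
by apply: ler_sum => r _; apply: htni; apply: psd_blk.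
Qed.

Lemma res_comb_sub (W X : vset) (w : bas W) (r : bas (vdiff X W)) :
  {subset V <= W} -> {subset W <= X} -> res V (comb w r) = res V w.
Proof.
move=> VW WX; apply: bas_eq => n nV.
by rewrite !glob_res nV glob_comb (VW _ nV) (WX _ (VW _ nV)).
Qed.

Lemma comb_assoc (W X : vset) (v : bas V) (a : bas W) (r : bas (vdiff X W)) :
  {subset V <= W} -> {subset W <= X} ->
  comb v (res (vdiff X V) (comb a r)) = comb (comb v (res (vdiff W V) a)) r.
Proof.
move=> VW WX; apply: bas_eq => n nX.
rewrite !glob_comb !glob_res glob_comb !mem_vdiff nX.
case nV: (n \in V); first by rewrite (VW _ nV).
case nW: (n \in W) => //=; by rewrite glob_res mem_vdiff nW nV.
Qed.

Lemma ptr_Ehat (W X : vset) (rho : op R X) :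
  {subset V <= W} -> {subset W <= X} ->
  @ptr R X W (@extS R V X E rho) = @extS R V W E (@ptr R X W rho).
Proof.
move=> VW WX; apply/funext => a; apply/funext => a'.
rewrite /ptr /extS.
under eq_bigr => r _ do rewrite !(res_comb_sub _ _ VW WX).
rewrite -Esum; apply: Econgr => k l; apply: eq_bigr => r _.
by rewrite !comb_assoc.
Qed.

Definition unitop (I : finType) (x y : I) : opT R I :=
  fun c c' => (c == x)%:R * (c' == y)%:R.

Definition adj (W : vset) (K : op R W) : op R W :=
  fun a a' => tr (mulop K (@extS R V W E (unitop a' a))).

Lemma decomp (I : finType) (t : opT R I) c c' :
  t c c' = \sum_x \sum_y t x y * unitop x y c c'.
Proof.
rewrite (@sum_only _ _ c) => [|x nx]; last first.
  by apply: big1 => y _; rewrite /unitop eq_sym (negbTE nx) mul0r mulr0.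
rewrite (@sum_only _ _ c') => [|y ny]; last first.
  by rewrite /unitop [c' == y]eq_sym (negbTE ny) !mulr0.
by rewrite /unitop !eqxx mulr1 mulr1.
Qed.

Lemma Ehat_lin (W : vset) (t : op R W) b b' :
  @extS R V W E t b b' = \sum_x \sum_y t x y * @extS R V W E (unitop x y) b b'.
Proof.
rewrite /extS.
rewrite (@Econgr _ (fun v v' => \sum_x \sum_y t x y *
    unitop x y (comb v (res (vdiff W V) b)) (comb v' (res (vdiff W V) b'))));
  last by move=> k l; rewrite decomp.
rewrite Esum; apply: eq_bigr => x _; rewrite Esum; apply: eq_bigr => y _.
by rewrite Escale.
Qed.

Lemma tr_mulop_sum (I J : finType) (K : opT R I) (F : J -> opT R I) :
  tr (mulop K (fun b b' => \sum_j F j b b')) = \sum_j tr (mulop K (F j)).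
Proof.
rewrite /tr /mulop [RHS]exchange_big; apply: eq_bigr => i _.
rewrite [RHS]exchange_big; apply: eq_bigr => k _.
by rewrite mulr_sumr.
Qed.

Lemma tr_mulop_scale (I : finType) (K S : opT R I) (c : C) :
  tr (mulop K (fun b b' => c * S b b')) = c * tr (mulop K S).
Proof.
rewrite /tr /mulop mulr_sumr; apply: eq_bigr => i _; rewrite mulr_sumr.
by apply: eq_bigr => k _; rewrite mulrCA.
Qed.

Lemma adjE (W : vset) (K : op R W) (t : op R W) :
  tr (mulop (adj K) t) = tr (mulop K (@extS R V W E t)).
Proof.
have -> : @extS R V W E t = fun b b' =>
    \sum_x \sum_y t x y * @extS R V W E (unitop x y) b b'.
  by apply/funext => b; apply/funext => b'; rewrite Ehat_lin.
rewrite tr_mulop_sum.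
under eq_bigr => x _ do rewrite tr_mulop_sum.
under eq_bigr => x _ do under eq_bigr => y _ do rewrite tr_mulop_scale.
have -> : tr (mulop (adj K) t) = \sum_a \sum_k adj K a k * t k a by [].
rewrite exchange_big; apply: eq_bigr => x _; apply: eq_bigr => y _.
by rewrite mulrC.
Qed.

Lemma adj_psd (W : vset) (K : op R W) : {subset V <= W} -> psd K -> psd (adj K).
Proof.
move=> VW hK v; rewrite qform_tr adjE; apply: tr_psd => //.
by apply: Ehat_psd => //; apply: psd_proj.
Qed.

Lemma adj_sub (W : vset) (K : op R W) : {subset V <= W} ->
  psd (fun a a' => @idop R _ a a' - K a a') ->
  psd (fun a a' => @idop R _ a a' - adj K a a').
Proof.
move=> VW hK v; rewrite qform_tr tr_mulop_sub tr_mulop_id adjE.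
have hp : psd (@extS R V W E (proj v)) by apply: Ehat_psd => //; apply: psd_proj.
have h1 := tr_psd hK hp; rewrite tr_mulop_sub tr_mulop_id in h1.
have h2 := Ehat_tr VW (psd_proj v).
have -> : tr (proj v) - tr (mulop K (@extS R V W E (proj v))) =
  (tr (proj v) - tr (@extS R V W E (proj v))) +
  (tr (@extS R V W E (proj v)) - tr (mulop K (@extS R V W E (proj v)))) by ring.
by apply: addr_ge0 => //; rewrite subr_ge0.
Qed.

Lemma adj_ext (W X : vset) (K : op R W) (rho : op R X) :
  {subset V <= W} -> {subset W <= X} ->
  tr (mulop (@extO R W X (adj K)) rho) = tr (mulop (@extO R W X K) (@extS R V X E rho)).
Proof.
move=> VW WX; rewrite !trE1 // adjE ptr_Ehat //.
Qed.
End Q2.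

Local Open Scope ring_scope.
Local Open Scope classical_set_scope.

Section Main.
Variable R : realType.
Local Notation C := (R[i]).

Lemma Re_ge0 (z : C) : 0 <= z -> 0 <= complex.Re z.
Proof. by rewrite lecE => /andP[]. Qed.

Lemma Re_le (z w : C) : z <= w -> complex.Re z <= complex.Re w.
Proof. by rewrite lecE => /andP[]. Qed.

Lemma ReB (z w : C) : complex.Re (z - w) = complex.Re z - complex.Re w.
Proof. by case: z; case: w. Qed.

Lemma ReD (z w : C) : complex.Re (z + w) = complex.Re z + complex.Re w.
Proof. by case: z; case: w. Qed.

Lemma expdem1 (W X : vset) (s : op R X) (M : op R W) :
  expdem s [set M]%classic = expv M s.
Proof.
rewrite /expdem; destruct (pselect ([set M]%classic = set0)) as [h|h].
  by exfalso; have : [set M]%classic M by []; rewrite h.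
by rewrite image_set1 inf1.
Qed.

Lemma psd0 (I : finType) (A : opT R I) : psd (fun i j => A i j - A i j).
Proof.
move=> v; rewrite /qform big1 // => i _; rewrite big1 // => j _.
by rewrite subrr mulr0 mul0r.
Qed.

Lemma effect_id (W : vset) : effect (@idop R (bas W)).
Proof. by split; [apply: psd_id | apply: psd0]. Qed.

Lemma expv_id (W X : vset) (s : op R X) : {subset W <= X} ->
  expv (@idop R (bas W)) s = complex.Re (tr s).
Proof. by move=> WX; rewrite /expv extO_id // tr_mulop_id. Qed.

Lemma expv_ge0 (W X : vset) (N : op R W) (s : op R X) : {subset W <= X} ->
  psd N -> psd s -> 0 <= expv N s.
Proof. by move=> WX hN hs; apply: Re_ge0; apply: tr_psd => //; apply: psd_extO. Qed.

Lemma expv_trans (W W' X : vset) (N : op R W) (s : op R X) :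
  {subset W <= W'} -> {subset W' <= X} ->
  expv (@extO R W W' N) s = expv N s.
Proof. by move=> h1 h2; rewrite /expv extO_trans. Qed.

Lemma effect_ext (W X : vset) (N : op R W) : {subset W <= X} ->
  effect N -> effect (@extO R W X N).
Proof.
move=> WX [h1 h2]; split; first exact: psd_extO.
rewrite /loew.
have -> : (fun i j => @idop R (bas X) i j - @extO R W X N i j) =
   @extO R W X (fun i j => @idop R (bas W) i j - N i j).
  by rewrite extO_sub extO_id.
exact: psd_extO.
Qed.


Lemma subset_cat (V W X : vset) : {subset V ++ W <= X} ->
  {subset V <= X} /\ {subset W <= X}.
Proof.
by move=> h; split => n hn; apply: h; rewrite mem_cat hn ?orbT.
Qed.

Variable V : vset.

Lemma key_tot (E F : sop R V) : DProg E -> DProg F -> le_T_e E F ->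
  forall (W : vset) (N : op R W), effect N ->
  forall (X : vset), {subset V ++ W <= X} ->
  forall rho : op R X, pdensity rho ->
  expv N (@extS R V X E rho) <= expv N (@extS R V X F rho).
Proof.
move=> [lE cE tE] [lF cF tF] hle W N eN X hX rho hr.
pose W' := V ++ W.
have VW' : {subset V <= W'} by move=> n hn; rewrite mem_cat hn.
have WW' : {subset W <= W'} by move=> n hn; rewrite mem_cat hn orbT.
have W'X : {subset W' <= X} by [].
pose N' := @extO R W W' N.
have eN' : effect N' by apply: effect_ext.
pose M := adj E N'.
have eM : effect M.
  split; first by apply: adj_psd => //; case: eN'.
  by apply: adj_sub => //; case: eN'.
have sE : sat_tot_e E M N'.
  move=> X' hX' rho' hr'; have [h1 h2] := subset_cat hX'.
  by rewrite /expv adj_ext // => n /VW' /h2.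
have sF := hle W' M N' eM eN' sE.
have hX2 : {subset V ++ W' <= X}.
  by move=> n; rewrite mem_cat => /orP[] hn; [apply: W'X; apply: VW'|apply: W'X].
have := sF X hX2 rho hr.
rewrite /M /expv adj_ext //.
by rewrite -!/(expv _ _) !(expv_trans _ _ WW').
Qed.

Lemma expv_par (E : sop R V) (W X : vset) (K : op R W) (rho : op R X) :
  sop_linear E -> {subset V <= W} -> {subset W <= X} ->
  expv (fun a a' => @idop R _ a a' - adj E (fun c c' => @idop R _ c c' - K c c') a a') rho
  = expv K (@extS R V X E rho) + complex.Re (tr rho)
    - complex.Re (tr (@extS R V X E rho)).
Proof.
move=> hl VW WX; rewrite /expv extO_sub tr_mulop_sub extO_id // tr_mulop_id.
rewrite adj_ext // extO_sub tr_mulop_sub extO_id // tr_mulop_id.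
rewrite !ReB; ring.
Qed.

Lemma key_par (E F : sop R V) : DProg E -> DProg F -> le_P_e E F ->
  forall (W : vset) (N : op R W), effect N ->
  forall (X : vset), {subset V ++ W <= X} ->
  forall rho : op R X, pdensity rho ->
  expv N (@extS R V X E rho) - complex.Re (tr (@extS R V X E rho)) <=
  expv N (@extS R V X F rho) - complex.Re (tr (@extS R V X F rho)).
Proof.
move=> [lE cE tE] [lF cF tF] hle W N eN X hX rho hr.
pose W' := V ++ W.
have VW' : {subset V <= W'} by move=> n hn; rewrite mem_cat hn.
have WW' : {subset W <= W'} by move=> n hn; rewrite mem_cat hn orbT.
have W'X : {subset W' <= X} by [].
pose N' := @extO R W W' N.
have eN' : effect N' by apply: effect_ext.
pose K := fun c c' => @idop R _ c c' - N' c c'.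
pose M := fun a a' => @idop R _ a a' - adj E K a a'.
have eM : effect M.
  split.
    apply: adj_sub => //.
    have -> : (fun a a' => @idop R (bas W') a a' - K a a') = N'.
      by apply/funext => a; apply/funext => a'; rewrite /K opprB addrC subrK.
    by case: eN'.
  rewrite /loew /M.
  have -> : (fun a a' => @idop R (bas W') a a' - (@idop R _ a a' - adj E K a a'))
     = adj E K.
    by apply/funext => a; apply/funext => a'; rewrite opprB addrC subrK.
  by apply: adj_psd => //; case: eN'.
have sE : sat_par_e E M N'.
  move=> X' hX' rho' hr'; have [h1 h2] := subset_cat hX'.
  by rewrite /M /K expv_par // => n /VW' /h2.
have sF := hle W' M N' eM eN' sE.
have hX2 : {subset V ++ W' <= X}.
  by move=> n; rewrite mem_cat => /orP[] hn; [apply: W'X; apply: VW'|apply: W'X].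
have := sF X hX2 rho hr.
rewrite /M /K expv_par // !(expv_trans _ _ WW') // => h.
lra.
Qed.

Lemma inf_mono (T : Type) (S : set T) (f g : T -> R) (c : R) :
  (exists t, S t) -> (forall t, S t -> 0 <= f t) ->
  (forall t, S t -> f t + c <= g t) ->
  inf [set f t | t in S]%classic + c <= inf [set g t | t in S]%classic.
Proof.
move=> [t0 h0] hf hfg.
apply: lb_le_inf; first by exists (g t0), t0.
move=> y [t ht <-]; apply: le_trans (hfg t ht); rewrite lerD2r.
apply: ge_inf; last by exists t.
by exists 0 => y' [t' ht' <-]; apply: hf.
Qed.

Lemma nonempty_of (T : Type) (S : set T) : S <> set0 -> exists t, S t.
Proof.
move=> h; apply: contrapT => hn; apply: h; apply/funext => t; apply/propext.
by split => // ht; apply: hn; exists t.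
Qed.

End Main.

Theorem corollary5p2 (R : realType) (V : vset) (E F : sop R V) :
  DProg E -> DProg F ->
  (le_T_s [set E]%classic [set F]%classic <-> le_T_e E F) /\
  (le_P_s [set E]%classic [set F]%classic <-> le_P_e E F).
Proof.
move=> hE hF.
have hE' := hE; have hF' := hF.
case: hE' => [lE cE tE]; case: hF' => [lF cF tF].
split; split.
- move=> hs W M N eM eN hEMN.
  have hT : [set M]%classic `<=` @effect R W by move=> M' ->.
  have hP : [set N]%classic `<=` @effect R W by move=> N' ->.
  have h := hs W _ _ hT hP.
  have : sat_tot_s [set F]%classic [set M]%classic [set N]%classic.
    apply: h => X hX rho hr E' ->; rewrite !expdem1; exact: hEMN.
  move=> h2 X hX rho hr; have := h2 X hX rho hr F erefl; by rewrite !expdem1.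
- move=> hle W Th Ps hT hP hs X hX rho hr F' ->.
  have h := hs X hX rho hr E erefl; apply: le_trans h _.
  have [h1 h2] := subset_cat hX.
  rewrite /expdem; destruct (pselect (Ps = set0)) as [e|ne].
    rewrite /= -!(expv_id _ h2); exact: (key_tot hE hF hle (@effect_id R W) hX hr).
  rewrite /= -[X in X <= _]addr0; apply: inf_mono.
  + exact: nonempty_of.
  + move=> N hN; apply: expv_ge0 => //; first by case: (hP _ hN).
    by apply: Ehat_psd => //; case: hr.
  + by move=> N hN; rewrite addr0; apply: (key_tot hE hF hle (hP _ hN)).
- move=> hs W M N eM eN hEMN.
  have hT : [set M]%classic `<=` @effect R W by move=> M' ->.
  have hP : [set N]%classic `<=` @effect R W by move=> N' ->.
  have h := hs W _ _ hT hP.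
  have : sat_par_s [set F]%classic [set M]%classic [set N]%classic.
    apply: h => X hX rho hr E' ->; rewrite !expdem1; exact: hEMN.
  move=> h2 X hX rho hr; have := h2 X hX rho hr F erefl; by rewrite !expdem1.
- move=> hle W Th Ps hT hP hs X hX rho hr F' ->.
  have h := hs X hX rho hr E erefl; apply: le_trans h _.
  have [h1 h2] := subset_cat hX.
  rewrite /expdem; destruct (pselect (Ps = set0)) as [e|ne].
    rewrite /=; lra.
  rewrite /=.
  have := @inf_mono R _ Ps (fun N => expv N (@extS R V X E rho))
     (fun N => expv N (@extS R V X F rho))
     (complex.Re (tr (@extS R V X F rho)) - complex.Re (tr (@extS R V X E rho))).
  move=> hm; suff : inf [set expv N (@extS R V X E rho) | N in Ps] +
     (complex.Re (tr (@extS R V X F rho)) - complex.Re (tr (@extS R V X E rho))) <=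
     inf [set expv N (@extS R V X F rho) | N in Ps] by move=> ?; lra.
  apply: hm.
  + exact: nonempty_of.
  + move=> N hN; apply: expv_ge0 => //; first by case: (hP _ hN).
    by apply: Ehat_psd => //; case: hr.
  + move=> N hN; have := key_par hE hF hle (hP _ hN) hX hr; lra.
Qed.
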